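(* Let $d\geq 2$ and let $\rho^s=\sum_{i,j=0}^{d-1}\rho^s_{ij}|i\rangle\langle j|$ be a state on $H_d=\mathbb{C}^d$. If for some $i\neq j$ $$|\rho^s_{ij}|>\frac{\sqrt{1-(\rho^s_{ii}+\rho^s_{jj})^2}}{2},$$ then there exists an incoherent operation $\Lambda$ on $H_d\otimes H_d$ such that $\Lambda(\rho^s\otimes|0\rangle\langle 0|)$ violates a Bell inequality (and hence is Bell-nonlocal).
   Context: Coherence is taken with respect to the computational basis $\{|0\rangle,\dots,|d-1\rangle\}$ of $H_d$ and the product computational basis of $H_d\otimes H_d$. The set $\mathcal{I}$ of incoherent states consists of the states diagonal in this basis. An incoherent operation is a completely positive trace-preserving map $\Lambda(\rho)=\sum_k K_k\rho K_k^\dagger$ with $K_k\mathcal{I}K_k^\dagger\subseteq\mathcal{I}$ for every Kraus operator $K_k$. A state is Bell-nonlocal if its measurement statistics do not admit a local hidden variable model. *)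

(* Defs.v *)
From HB Require Import structures.
From mathcomp Require Import all_boot all_order all_algebra.
From mathcomp Require Import complex mxtens.
From mathcomp Require Import reals.
Set Implicit Arguments. Unset Strict Implicit. Unset Printing Implicit Defensive.
Import Order.TTheory GRing.Theory Num.Theory Num.Def.
Local Open Scope ring_scope.

Section Quantum.
Variable R : realType.
Local Notation C := (R[i]).

Definition adjmx {m n} (A : 'M[C]_(m, n)) : 'M[C]_(n, m) := (map_mx conjC A)^T.

Definition psdmx {n} (A : 'M[C]_n) : Prop :=
  adjmx A = A /\ forall v : 'cV[C]_n, 0 <= (adjmx v *m A *m v) 0 0.

Definition is_state {n} (rho : 'M[C]_n) : Prop := psdmx rho /\ \tr rho = 1.

Definition incoherent_state {n} (delta : 'M[C]_n) : Prop :=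
  is_state delta /\ is_diag_mx delta.

Definition kraus_map {n} (Ks : seq 'M[C]_n) (rho : 'M[C]_n) : 'M[C]_n :=
  \sum_(K <- Ks) K *m rho *m adjmx K.

(* incoherent operation: CPTP map with Kraus operators each mapping incoherent
   states to (unnormalized) incoherent states, i.e. diagonal matrices *)
Definition incoherent_kraus {n} (Ks : seq 'M[C]_n) : Prop :=
  \sum_(K <- Ks) adjmx K *m K = 1%:M /\
  forall K, K \in Ks -> forall delta : 'M[C]_n,
      incoherent_state delta -> is_diag_mx (K *m delta *m adjmx K).

Definition pm1_observable {d} (A : 'M[C]_d) : Prop :=
  adjmx A = A /\ A *m A = 1%:M.

Definition violates_CHSH {d} (sigma : 'M[C]_(d * d)) : Prop :=
  exists A0 A1 B0 B1 : 'M[C]_d,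
    [/\ pm1_observable A0, pm1_observable A1, pm1_observable B0 &
        pm1_observable B1] /\
    2 < `| \tr (sigma *m (A0 *t B0 + A0 *t B1 + A1 *t B0 - A1 *t B1)) |.

Definition ket0bra0 {d} : 'M[C]_d.+1 := delta_mx 0 0.

End Quantum.
Arguments ket0bra0 {R d}.

(* Main.v *)
Require Import Defs.
From HB Require Import structures.
From mathcomp Require Import all_boot all_order all_algebra.
From mathcomp Require Import complex mxtens.
From mathcomp Require Import reals.
From mathcomp Require Import fingroup perm ring.
Import Order.TTheory GRing.Theory Num.Theory Num.Def.
Local Open Scope ring_scope.

Section Helpers.
Variable R : realType.
Local Notation C := (R[i]).
Variable n : nat.
Variables i j : 'I_n.+1.
Hypothesis hij : i != j.

Lemma sum1 (F : 'I_n.+1 -> C) k : (forall m, m != k -> F m = 0) -> \sum_m F m = F k.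
Proof.
move=> H; rewrite (bigD1 k) //= big1 ?addr0 // => m /H //.
Qed.

Lemma sum2 (F : 'I_n.+1 -> C) : (forall m, m != i -> m != j -> F m = 0) ->
  \sum_m F m = F i + F j.
Proof.
move=> H; rewrite (bigD1 i) //= (bigD1 j) /=; last by rewrite eq_sym.
by rewrite big1 ?addr0 // => m /andP[] /H.
Qed.

Lemma sum_split2 (F : 'I_n.+1 -> C) :
  \sum_m F m = F i + F j + \sum_(m | (m != i) && (m != j)) F m.
Proof.
rewrite (bigD1 i) //= (bigD1 j) /=; last by rewrite eq_sym.
by rewrite addrA.
Qed.

Definition obs (a b : C) : 'M[C]_n.+1 :=
  \matrix_(k, l) if k == l then (if k == i then a else if k == j then - a else 1)
     else if (k == i) && (l == j) then b else if (k == j) && (l == i) then b^* else 0.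

Ltac rweqs := repeat match goal with
 | H : (?a == ?b) = false |- context[?a == ?b] => rewrite H
 | H : (?a == ?b) = false |- context[?b == ?a] => rewrite (eq_sym b a) H
 end.
Ltac splitk k := case: (eqVneq k i) => [?|/negbTE ?]; [subst k|case: (eqVneq k j) => [?|/negbTE ?]; [subst k|]].

Lemma obs_pm1 a b : a^* = a -> a * a + b * b^* = 1 -> pm1_observable (obs a b).
Proof.
move=> ha hab; have ji : j != i by rewrite eq_sym.
have eij := negbTE hij; have eji := negbTE ji.
split.
  apply/matrixP => k l; rewrite !mxE.
  splitk k; splitk l; rweqs; rewrite ?eqxx /= ?rmorphN ?ha ?conjCK ?rmorph1 ?rmorph0 //.
  - by congr (- _); exact: ha.
  by case: (eqVneq l k) => [?|/negbTE ?]; [subst l|]; rweqs; rewrite ?eqxx ?rmorph1 ?rmorph0.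
apply/matrixP => k l; rewrite !mxE.
splitk k.
- rewrite sum2; last first.
    by move=> m /negbTE mi /negbTE mj; rewrite !mxE; rweqs; rewrite ?eqxx /= mul0r.
  rewrite !mxE !eqxx eij eji /=.
  splitk l; rweqs; rewrite ?eqxx /= ?mulr0 ?addr0 //.
  by rewrite mulrN mulrC subrr.
- rewrite sum2; last first.
    by move=> m /negbTE mi /negbTE mj; rewrite !mxE; rweqs; rewrite ?eqxx /= mul0r.
  rewrite !mxE !eqxx eij eji /=.
  splitk l; rweqs; rewrite ?eqxx /= ?mulr0 ?addr0 //.
  - by rewrite mulNr mulrC subrr.
  - by rewrite mulrNN mulrC addrC.
- rewrite (@sum1 _ k); last first.
    by move=> m /negbTE mk; rewrite !mxE; rweqs; rewrite ?eqxx /= mul0r.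
  rewrite !mxE eqxx; rweqs; rewrite /= mul1r.
  splitk l; rweqs => //.
  by case: (eqVneq k l) => [?|/negbTE ?]; [subst l|]; rweqs; rewrite ?eqxx.
Qed.

End Helpers.

Section Perm.
Variable R : realType.
Local Notation C := (R[i]).
Variable n : nat.
Local Notation N := (n.+1 * n.+1)%N.
Local Notation idx := (@mxtens_index n.+1 n.+1).
Local Notation unidx := (@mxtens_unindex n.+1 n.+1).

Definition fidx (x : 'I_N) : 'I_N :=
  idx ((unidx x).1, (unidx x).2 - (unidx x).1).

Lemma fidx_inj : injective fidx.
Proof.
move=> x y /(congr1 unidx); rewrite /fidx !mxtens_indexK => H.
apply: (can_inj (@mxtens_unindexK n.+1 n.+1)); move: H.
move: (unidx x) (unidx y) => [a b] [c e] /= /eqP; rewrite xpair_eqE => /andP[/eqP e1 /eqP].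
rewrite e1 => /(congr1 (+%R^~ c)); rewrite /= !subrK => ->.
by rewrite -e1.
Qed.

Definition sperm : {perm 'I_N} := perm fidx_inj.
Definition Pm : 'M[C]_N := perm_mx sperm.

Lemma adjPm : adjmx Pm = perm_mx sperm^-1.
Proof.
rewrite /adjmx /Pm -tr_perm_mx; congr trmx.
by apply/matrixP => x y; rewrite !mxE rmorph_nat.
Qed.

Lemma kraus_entry (T : 'M[C]_N) x y : kraus_map [:: Pm] T x y = T (sperm x) (sperm y).
Proof.
rewrite /kraus_map big_seq1 adjPm /Pm -row_permE -col_permE !mxE //.
Qed.

Lemma kraus_ok : incoherent_kraus [:: Pm].
Proof.
split.
  by rewrite big_seq1 adjPm /Pm -perm_mxM mulVg perm_mx1.
move=> K; rewrite inE => /eqP -> delta [_ /is_diag_mxP dd].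
apply/is_diag_mxP => x y xy.
have := kraus_entry delta x y; rewrite /kraus_map big_seq1 => ->.
apply: dd; apply: contra xy => /eqP /val_inj /perm_inj -> //.
Qed.

Lemma sum_idx (F : 'I_N -> C) :
  \sum_x F x = \sum_(k < n.+1) \sum_(l < n.+1) F (idx (k, l)).
Proof.
rewrite pair_big /= (reindex (@mxtens_index n.+1 n.+1)) /=; last first.
  by exists unidx => ? _; rewrite (mxtens_indexK, mxtens_unindexK).
by apply: eq_bigr => -[k l].
Qed.

Lemma sperm_idx k l : sperm (idx (k, l)) = idx (k, l - k).
Proof. by rewrite /sperm permE /fidx mxtens_indexK. Qed.

Lemma trace_formula (rho : 'M[C]_n.+1) (M : 'M[C]_N) :
  \tr (kraus_map [:: Pm] (rho *t (@ket0bra0 R n)) *m M) =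
  \sum_k \sum_k' rho k k' * M (idx (k', k')) (idx (k, k)).
Proof.
rewrite /mxtrace sum_idx; apply: eq_bigr => k _.
rewrite (@sum1 _ _ _ k) ?subrr; last first.
  move=> l lk; rewrite !mxE big1 // => y _.
  rewrite kraus_entry.
  case: (mxtens_indexP y) => k' l'.
  by rewrite !sperm_idx tensmxE /ket0bra0 !mxE subr_eq0 (negbTE lk) /= mulr0 mul0r.
rewrite !mxE sum_idx; apply: eq_bigr => k' _.
rewrite (@sum1 _ _ _ k'); last first.
  move=> l lk; rewrite kraus_entry !sperm_idx tensmxE /ket0bra0 !mxE.
  by rewrite !subr_eq0 (negbTE lk) andbF /= mulr0 mul0r.
by rewrite kraus_entry !sperm_idx tensmxE /ket0bra0 !mxE !subrr eqxx /= mulr1.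
Qed.

End Perm.

Ltac rweqsB := repeat match goal with
 | H : (?a == ?b) = false |- context[?a == ?b] => rewrite H
 | H : (?a == ?b) = false |- context[?b == ?a] => rewrite (eq_sym b a) H
 end.

Section Main.
Variable R : realType.
Local Notation C := (R[i]).
Variable n : nat.
Variable rho : 'M[C]_n.+1.
Hypothesis hst : is_state rho.

Lemma diag_ge0 k : 0 <= rho k k.
Proof.
case: hst => [[_ H] _]; have := H (delta_mx k 0).
rewrite /adjmx.
have -> : map_mx conjC (delta_mx k 0 : 'cV[C]_n.+1) = delta_mx k 0.
  by apply/matrixP => x y; rewrite !mxE rmorph_nat.
by rewrite trmx_delta -rowE -colE !mxE.
Qed.

Lemma herm_entry k l : rho l k = (rho k l)^*.
Proof.
case: hst => [[H _] _]; have := congr1 (fun M : 'M[C]_n.+1 => M l k) H.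
by rewrite /= !mxE => <-.
Qed.

Lemma trace1 : \sum_k rho k k = 1.
Proof. by case: hst => _ <-. Qed.

Lemma conjS (c t S : C) : t \is Num.real -> S \is Num.real ->
  (S * (c / t))^* = S * (c^* / t).
Proof.
move=> tR SR; rewrite !rmorphM fmorphV.
change (conjC S * (conjC c * (conjC t)^-1) = S * (c^* / t)).
by rewrite (conj_Creal SR) (conj_Creal tR).
Qed.

Lemma Mentry (A0 A1 B0 B1 : 'M[C]_n.+1) k k' :
  (A0 *t B0 + A0 *t B1 + A1 *t B0 - A1 *t B1)
     (@mxtens_index n.+1 n.+1 (k', k')) (@mxtens_index n.+1 n.+1 (k, k)) =
  A0 k' k * B0 k' k + A0 k' k * B1 k' k + A1 k' k * B0 k' k - A1 k' k * B1 k' k.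
Proof. by rewrite !mxE !mxtens_indexK. Qed.

Lemma chsh_n (i j : 'I_n.+1) : i != j ->
  sqrtC (1 - (rho i i + rho j j) ^+ 2) / 2 < `|rho i j| ->
  violates_CHSH (kraus_map [:: Pm R n] (rho *t (@ket0bra0 R n))).
Proof.
move=> hij hyp.
have ji : j != i by rewrite eq_sym.
have eij := negbTE hij; have eji := negbTE ji.
set c := rho i j in hyp *; set t := `|c| in hyp *; set p := rho i i + rho j j in hyp *.
set q := \sum_(k | (k != i) && (k != j)) rho k k.
have hq : p + q = 1 by rewrite /p /q -(@sum_split2 _ _ _ _ hij (fun k => rho k k)) trace1.
have q0 : 0 <= q by apply: sumr_ge0 => k _; apply: diag_ge0.
have p0 : 0 <= p by apply: addr_ge0; apply: diag_ge0.
have p1 : p <= 1 by rewrite -hq lerDl.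
have t0 : 0 < t.
  apply: le_lt_trans hyp; apply: divr_ge0 => //.
  by rewrite sqrtC_ge0 subr_ge0 exprn_ile1.
have tR : t \is Num.real := normr_real c.
have c0 : c != 0 by rewrite -normr_gt0.
have tn0 : t != 0 by rewrite gt_eqF.
have t2 : 0 < 1 + t ^+ 2 by rewrite addr_gt0 // exprn_gt0.
have t2n0 : 1 + t ^+ 2 != 0 by rewrite gt_eqF.
have hcc : c^* = t ^+ 2 / c.
  by rewrite /t normCK [c * _]mulrC mulfK.
pose S := 2 * t / (1 + t ^+ 2).
pose Cc := (1 - t ^+ 2) / (1 + t ^+ 2).
have SR : S \is Num.real by rewrite /S !(rpredM, rpredV, rpredD, rpredX, rpred1, rpredB, rpred_nat, tR).
have CR : Cc \is Num.real by rewrite /Cc !(rpredM, rpredV, rpredD, rpredX, rpred1, rpredB, rpredN, rpred_nat, tR).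
have hb : (S * (c / t))^* = S * (t ^+ 2 / c / t) by rewrite conjS // hcc.
have hb' : (- (S * (c / t)))^* = - (S * (t ^+ 2 / c / t)).
  rewrite rmorphN; change (- conjC (S * (c / t)) = - (S * (t ^+ 2 / c / t))).
  by rewrite hb.
have hC := conj_Creal CR.
pose A0 := @obs R n i j 1 0; pose A1 := @obs R n i j 0 1.
pose B0 := @obs R n i j Cc (S * (c / t)); pose B1 := @obs R n i j Cc (- (S * (c / t))).
exists A0, A1, B0, B1.
split.
  split.
  - apply: obs_pm1 => //; first by rewrite rmorph1.
    by rewrite mulr1 mul0r addr0.
  - apply: obs_pm1 => //; first by rewrite rmorph0.
    by rewrite mulr0 add0r mul1r rmorph1.
  - apply: obs_pm1 => //; rewrite hb /Cc /S; field.
    by rewrite c0 tn0 t2n0.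
  - apply: obs_pm1 => //; rewrite hb' /Cc /S; field.
    by rewrite c0 tn0 t2n0.
rewrite trace_formula.
pose G k' k := A0 k' k * B0 k' k + A0 k' k * B1 k' k + A1 k' k * B0 k' k - A1 k' k * B1 k' k.
rewrite (eq_bigr (fun k => \sum_k' rho k k' * G k' k)); last first.
  by move=> k _; apply: eq_bigr => k' _; rewrite Mentry.
have Hi : \sum_k' rho i k' * G k' i = rho i i * G i i + rho i j * G j i.
  apply: sum2 => // k' /negbTE a /negbTE b.
  rewrite /G /A0 /A1 /B0 /B1 !mxE; rweqsB; rewrite ?eqxx ?andbF ?andbT /=; ring.
have Hj : \sum_k' rho j k' * G k' j = rho j i * G i j + rho j j * G j j.
  apply: sum2 => // k' /negbTE a /negbTE b.
  rewrite /G /A0 /A1 /B0 /B1 !mxE; rweqsB; rewrite ?eqxx ?andbF ?andbT /=; ring.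
have Hk : \sum_(k | (k != i) && (k != j)) \sum_k' rho k k' * G k' k = q * 2.
  rewrite /q mulr_suml; apply: eq_bigr => k /andP[/negbTE a /negbTE b].
  rewrite (@sum1 _ _ _ k); last first.
    move=> k' /negbTE e.
    rewrite /G /A0 /A1 /B0 /B1 !mxE; rweqsB; rewrite ?eqxx ?andbF ?andbT /=; ring.
  rewrite /G /A0 /A1 /B0 /B1 !mxE; rweqsB; rewrite ?eqxx ?andbF ?andbT /=; ring.
rewrite (@sum_split2 _ _ _ _ hij) Hi Hj Hk.
have Gii : G i i = 2 * Cc by rewrite /G /A0 /A1 /B0 /B1 !mxE; rweqsB; rewrite ?eqxx ?andbF ?andbT /=; ring.
have Gjj : G j j = 2 * Cc by rewrite /G /A0 /A1 /B0 /B1 !mxE; rweqsB; rewrite ?eqxx ?andbF ?andbT /=; ring.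
have Gij : G i j = 2 * (S * (c / t)) by rewrite /G /A0 /A1 /B0 /B1 !mxE; rweqsB; rewrite ?eqxx ?andbF ?andbT /=; ring.
have Gji : G j i = 2 * (S * (t ^+ 2 / c / t)).
  by rewrite /G /A0 /A1 /B0 /B1 !mxE; rweqsB; rewrite ?eqxx ?andbF ?andbT /= hb hb'; ring.
have hq' : q = 1 - p by rewrite -hq addrC addKr.
rewrite Gii Gjj Gij Gji hq' (herm_entry i j) hcc -/c.
have -> : rho i i * (2 * Cc) + c * (2 * (S * (t ^+ 2 / c / t))) +
    (t ^+ 2 / c * (2 * (S * (c / t))) + rho j j * (2 * Cc)) + (1 - p) * 2
    = 2 + 4 * t ^+ 2 * (2 - p) / (1 + t ^+ 2).
  rewrite /p /S /Cc; field; by rewrite c0 tn0 t2n0.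
have X0 : 0 < 4 * t ^+ 2 * (2 - p) / (1 + t ^+ 2).
  apply: divr_gt0 => //; apply: mulr_gt0; first by rewrite mulr_gt0 // exprn_gt0.
  by rewrite subr_gt0 (le_lt_trans p1) // ltr1n.
rewrite gtr0_norm; first by rewrite ltrDl.
by rewrite addr_gt0.
Qed.

End Main.

Theorem theorem2 (R : realType) (d : nat) (hd : (2 <= d)%N)
  (rho : 'M[R[i]]_d.-1.+1) :
  is_state rho ->
  (exists i j : 'I_d.-1.+1, i != j /\
     `|rho i j| > sqrtC (1 - (rho i i + rho j j) ^+ 2) / 2) ->
  exists Ks : seq 'M[R[i]]_(d.-1.+1 * d.-1.+1),
    incoherent_kraus Ks /\
    violates_CHSH (kraus_map Ks (rho *t ket0bra0)).
Proof.
move=> hst [i [j [hij hyp]]].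
exists [:: Pm R d.-1]; split; first exact: kraus_ok.
exact: (@chsh_n R d.-1 rho hst i j hij hyp).
Qed.
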